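(* Let $N\ge1$, let $\Psi_N$ be the $N\times N$ lower triangular matrix $(\Psi_N)_{jk}=\binom{j}{k}$, $0\le j,k<N$, let $\Lambda_N=\mathrm{diag}(1,-1,1,\dots,(-1)^{N-1})$, and let $J_N$ be the $N\times N$ symmetric tridiagonal matrix with $(J_N)_{kk}=k(2k^2+3k+2-N^2)$ and $(J_N)_{k,k+1}=(J_N)_{k+1,k}=(k+1)(N^2-(k+1)^2)$. Set $B_N=-\Lambda_NJ_N\Lambda_N+(N^2-1)I_N$ and $S_N=\Psi_N^\intercal\Psi_N$, i.e. $(S_N)_{jk}=\sum_{i=0}^{N-1}\binom{i}{j}\binom{i}{k}$. Then $B_NS_N=S_NB_N$.
   Context: Matrix indices start at $0$; $I_N$ is the $N\times N$ identity matrix. *)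

(* Defs.v *)
From mathcomp Require Import all_boot all_order all_algebra.
Set Implicit Arguments. Unset Strict Implicit. Unset Printing Implicit Defensive.
Import GRing.Theory Num.Theory.
Local Open Scope ring_scope.

Definition PsiN (N : nat) : 'M[int]_N := \matrix_(j < N, k < N) ('C(j, k))%:Z.

Definition LambdaN (N : nat) : 'M[int]_N :=
  \matrix_(j < N, k < N) (if j == k then (-1) ^+ j else 0).

Definition JN (N : nat) : 'M[int]_N :=
  \matrix_(j < N, k < N)
    (let n : int := N%:Z in
     let a : int := j%:Z in
     let b : int := k%:Z in
     if (val j == val k) then a * (2 * a ^+ 2 + 3 * a + 2 - n ^+ 2)
     else if (val k == (val j).+1)%N then b * (n ^+ 2 - b ^+ 2)
     else if (val j == (val k).+1)%N then a * (n ^+ 2 - a ^+ 2)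
     else 0).

Definition BN (N : nat) : 'M[int]_N :=
  - (LambdaN N *m JN N *m LambdaN N) + ((N%:Z) ^+ 2 - 1)%:M.

Definition SN (N : nat) : 'M[int]_N := (PsiN N)^T *m PsiN N.

(* Main.v *)
From mathcomp Require Import all_boot all_order all_algebra.
From mathcomp Require Import ring lra zify.
Require Import Defs.
Import GRing.Theory Num.Theory.
Local Open Scope ring_scope.

Lemma mulmxLam N (A : 'M[int]_N) j l : (A *m LambdaN N) j l = A j l * (-1)^+l.
Proof.
rewrite mxE (bigD1 l) //= big1 ?addr0; first by rewrite mxE eqxx.
by move=> k hk; rewrite mxE (negbTE hk) mulr0.
Qed.

Lemma mulLammx N (A : 'M[int]_N) j l : (LambdaN N *m A) j l = (-1)^+j * A j l.
Proof.
rewrite mxE (bigD1 j) //= big1 ?addr0; first by rewrite mxE eqxx.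
by move=> k hk; rewrite mxE eq_sym (negbTE hk) mul0r.
Qed.

Definition bf (N j l : nat) : int :=
  let n : int := N%:Z in
  if j == l then n^+2 - 1 - j%:Z * (2 * j%:Z^+2 + 3 * j%:Z + 2 - n^+2)
  else if l == j.+1 then l%:Z * (n^+2 - l%:Z^+2)
  else if j == l.+1 then j%:Z * (n^+2 - j%:Z^+2) else 0.

Lemma sgn2 (j : nat) : (-1)^+j * (-1)^+j = 1 :> int.
Proof. by rewrite -expr2 sqrr_sign. Qed.

Lemma sgnA j (x : int) : (-1)^+j * x * (-1)^+j.+1 = - x.
Proof. transitivity (- (x * ((-1)^+j * (-1)^+j))); first by rewrite exprS; ring.
by rewrite sgn2 mulr1. Qed.
Lemma sgnB j (x : int) : (-1)^+j.+1 * x * (-1)^+j = - x.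
Proof. transitivity (- (x * ((-1)^+j * (-1)^+j))); first by rewrite exprS; ring.
by rewrite sgn2 mulr1. Qed.
Lemma sgnC j (x : int) : (-1)^+j * x * (-1)^+j = x.
Proof. transitivity (x * ((-1)^+j * (-1)^+j)); first by ring.
by rewrite sgn2 mulr1. Qed.

Lemma BN_E N (j l : 'I_N) : BN N j l = bf N j l.
Proof.
have oppE : forall (M : 'M[int]_N) j l, (- M) j l = - M j l by move=> *; rewrite mxE.
rewrite /BN mxE oppE mulmxLam mulLammx [X in _ + X = _]mxE /JN mxE /bf.
case: j l => j hj [l hl] /=.
have -> : (Ordinal hj == Ordinal hl) = (j == l) by [].
case: (eqVneq j l) => [<-|ne] /=.
  rewrite sgnC mulr1n; ring.
rewrite mulr0n addr0.
case: (eqVneq l j.+1) => [->|ne2] /=.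
  by rewrite sgnA opprK.
case: (eqVneq j l.+1) => [->|ne3] /=.
  by rewrite sgnB opprK.
by rewrite mulr0 mul0r oppr0.
Qed.
Lemma key_poly (n i l a b c d : int) :
  l * c = (i + 1 - l) * a ->
  (l + 1) * b = (i - l) * c ->
  i * d = (i - l) * c ->
  c * (n^+2 - 1 - l * (2 * l^+2 + 3 * l + 2 - n^+2)) + a * (l * (n^+2 - l^+2))
   + b * ((l+1) * (n^+2 - (l+1)^+2))
  = i * (2 * i^+2 + 3 * i + 2 - n^+2) * c + i * (n^+2 - i^+2) * d
   + (i+1) * (n^+2 - (i+1)^+2) * (c + a).
Proof.
move=> R0 R1 R2.
apply/eqP; rewrite -subr_eq0; apply/eqP.
have -> : c * (n^+2 - 1 - l * (2 * l^+2 + 3 * l + 2 - n^+2)) + a * (l * (n^+2 - l^+2))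
   + b * ((l+1) * (n^+2 - (l+1)^+2)) - (i * (2 * i^+2 + 3 * i + 2 - n^+2) * c + i * (n^+2 - i^+2) * d
   + (i+1) * (n^+2 - (i+1)^+2) * (c + a)) =
  (n^+2 - l^+2 - l*(i+1) - (i+1)^+2) * (l * c - (i + 1 - l) * a)
  + (n^+2 - (l+1)^+2) * ((l + 1) * b - (i - l) * c)
  - (n^+2 - i^+2) * (i * d - (i - l) * c) by ring.
by rewrite R0 R1 R2; ring.
Qed.
Lemma R1 (i l : nat) : (l%:Z + 1) * ('C(i, l.+1))%:Z = (i%:Z - l%:Z) * ('C(i, l))%:Z.
Proof.
have := mul_bin_left i l.
case: (leqP l i) => h H.
  nia.
rewrite !bin_small //; [|lia]. by rewrite !mulr0.
Qed.

Lemma R2 (i l : nat) : (i%:Z) * ('C(i.-1, l))%:Z = (i%:Z - l%:Z) * ('C(i, l))%:Z.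
Proof.
have := mul_bin_down i l.
case: (leqP l i) => h H.
  nia.
rewrite !bin_small //; [|lia]. by rewrite !mulr0.
Qed.

Definition aa (i l : nat) : nat := if l is l'.+1 then 'C(i, l') else 0%N.

Lemma R0 (i l : nat) : (l%:Z) * ('C(i, l))%:Z = (i%:Z + 1 - l%:Z) * (aa i l)%:Z.
Proof.
case: l => [|l] /=; first by rewrite !mul0r mulr0.
have := mul_bin_left i l.
case: (leqP l i) => h H.
  nia.
rewrite !bin_small //; [|lia]. by rewrite !mulr0.
Qed.

Lemma R3 (i l : nat) : ('C(i.+1, l))%:Z = ('C(i, l))%:Z + (aa i l)%:Z.
Proof.
case: l => [|l] /=; first by rewrite !bin0 addr0.
by rewrite binS PoszD.
Qed.

Lemma sum_pick N (F : nat -> int) m :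
  \sum_(j < N) (if (j:nat) == m then F j else 0) = if (m < N)%N then F m else 0.
Proof.
case: ltnP => h.
  rewrite (bigD1 (Ordinal h)) //= eqxx big1 ?addr0 // => j hj.
  case: eqP => // e; case/negP: hj; apply/eqP; exact: val_inj.
rewrite big1 // => j _; case: eqP => // e.
have := ltn_ord j; rewrite e; lia.
Qed.

Lemma sum_pickS N (F : nat -> int) m :
  \sum_(j < N) (if (j:nat).+1 == m then F j else 0) =
  if m is m'.+1 then (if (m' < N)%N then F m' else 0) else 0.
Proof.
case: m => [|m]; first by rewrite big1.
rewrite -sum_pick; apply: eq_bigr => j _; by rewrite eqSS.
Qed.

Lemma PB_E N (i l : 'I_N) :
  let n : int := N%:Z in
  (PsiN N *m BN N) i l =
  ('C(i, l))%:Z * (n^+2 - 1 - l%:Z * (2 * l%:Z^+2 + 3 * l%:Z + 2 - n^+2))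
  + (aa i l)%:Z * (l%:Z * (n^+2 - l%:Z^+2))
  + ('C(i, l.+1))%:Z * ((l%:Z+1) * (n^+2 - (l%:Z+1)^+2)).
Proof.
move=> n; rewrite mxE.
under eq_bigr => j _ do rewrite BN_E /PsiN mxE.
case: i l => i hi [l hl] /=.
transitivity (\sum_(j < N)
  ((if (j:nat) == l then ('C(i, j))%:Z * (n^+2 - 1 - l%:Z * (2 * l%:Z^+2 + 3 * l%:Z + 2 - n^+2)) else 0)
   + (if (j:nat).+1 == l then ('C(i, j))%:Z * (l%:Z * (n^+2 - l%:Z^+2)) else 0)
   + (if (j:nat) == l.+1 then ('C(i, j))%:Z * ((l%:Z+1) * (n^+2 - (l%:Z+1)^+2)) else 0))).
  apply: eq_bigr => [[j hj]] _ /=; rewrite /bf -/n.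
  case: (eqVneq j l) => [->|ne].
    have -> : (l == l.+1) = false by lia.
    have -> : (l.+1 == l) = false by lia.
    by rewrite !addr0.
  case: (eqVneq l j.+1) => [->|ne2].
    have -> : (j == j.+2) = false by lia.
    by rewrite ?eqxx add0r addr0.
  case: (eqVneq j l.+1) => [->|ne3]; last by rewrite mulr0 !addr0.
  by rewrite add0r -addn1 PoszD.
rewrite !big_split /= (sum_pick _ (fun j => ('C(i, j))%:Z * _)) (sum_pickS _ (fun j => ('C(i, j))%:Z * _)) (sum_pick _ (fun j => ('C(i, j))%:Z * _)) hl.
congr (_ + _ + _).
  case: l hl => [|l] hl /=; first by rewrite !mul0r ?mulr0.
  by rewrite (ltnW hl).
case: ltnP => // h.
rewrite bin_small ?mul0r //; lia.
Qed.

Lemma JP_E N (i l : 'I_N) :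
  let n : int := N%:Z in
  (JN N *m PsiN N) i l =
  i%:Z * (2 * i%:Z^+2 + 3 * i%:Z + 2 - n^+2) * ('C(i, l))%:Z
  + i%:Z * (n^+2 - i%:Z^+2) * ('C(i.-1, l))%:Z
  + (i%:Z+1) * (n^+2 - (i%:Z+1)^+2) * ('C(i.+1, l))%:Z.
Proof.
move=> n; rewrite mxE.
under eq_bigr => k _ do rewrite /JN /PsiN !mxE.
case: i l => i hi [l hl] /=.
transitivity (\sum_(k < N)
  ((if (k:nat) == i then i%:Z * (2 * i%:Z^+2 + 3 * i%:Z + 2 - n^+2) * ('C(k, l))%:Z else 0)
   + (if (k:nat).+1 == i then i%:Z * (n^+2 - i%:Z^+2) * ('C(k, l))%:Z else 0)
   + (if (k:nat) == i.+1 then (i%:Z+1) * (n^+2 - (i%:Z+1)^+2) * ('C(k, l))%:Z else 0))).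
  apply: eq_bigr => [[k hk]] _ /=; rewrite -/n.
  case: (eqVneq i k) => [->|ne].
    have -> : (k == k.+1) = false by lia.
    have -> : (k.+1 == k) = false by lia.
    by rewrite !addr0.
  case: (eqVneq k i.+1) => [->|ne2].
    have -> : (i.+2 == i) = false by lia.
    by rewrite ?add0r -addn1 PoszD.
  case: (eqVneq i k.+1) => [->|ne3]; first by rewrite ?eqxx ?add0r ?addr0.
  rewrite ?(_ : (k.+1 == i) = false); last by lia.
rewrite !big_split /= (sum_pick _ (fun k => _ * ('C(k, l))%:Z)) (sum_pickS _ (fun k => _ * ('C(k, l))%:Z)) (sum_pick _ (fun k => _ * ('C(k, l))%:Z)) hi.
congr (_ + _ + _).
  case: i hi => [|i] hi /=; first by rewrite !mul0r.
  by rewrite (ltnW hi).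
case: ltnP => // h.
have -> : n = i%:Z + 1 by rewrite /n; lia.
by rewrite subrr mulr0 mul0r.
Qed.

Lemma BN_sym N : (BN N)^T = BN N.
Proof.
apply/matrixP => j l; rewrite mxE !BN_E /bf.
case: j l => j hj [l hl] /=.
case: (eqVneq j l) => [->|ne] //.
case: (eqVneq j l.+1) => [->|ne2] //=.
rewrite (_ : (l == l.+2) = false) //; lia.
Qed.

Lemma JN_sym N : (JN N)^T = JN N.
Proof.
apply/matrixP => j l; rewrite !mxE.
case: j l => j hj [l hl] /=.
case: (eqVneq j l) => [->|ne] //.
case: (eqVneq j l.+1) => [->|ne2] //=.
rewrite (_ : (l == l.+2) = false) //; lia.
Qed.

Theorem mainTheorem7 (N : nat) (hN : (1 <= N)%N) :
  BN N *m SN N = SN N *m BN N.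
Proof.
have PB : PsiN N *m BN N = JN N *m PsiN N.
  apply/matrixP => i l; rewrite PB_E JP_E R3.
  by apply: key_poly; [apply: R0 | apply: R1 | apply: R2].
rewrite /SN mulmxA -{1}BN_sym -trmx_mul PB trmx_mul JN_sym.
by rewrite -!mulmxA PB.
Qed.
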